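(* Let $H$ be a Hopf algebra over $\mathbb{C}$ and let $B=A^{coH}\subseteq A$ be an $H$-Hopf–Galois extension, with $A$ faithfully flat as a left $B$-module, and suppose $B$ is contained in the centre of $A$. Then $\mathrm{Aut}_H(A)$ is a group with respect to the product $F\cdot G:=G\circ F$ (unit $\mathrm{id}_A$). For $F\in\mathrm{Aut}_H(A)$ and $a\in A$, the element $a_{(0)}F(a_{(1)}^{\langle 1\rangle})\otimes_B a_{(1)}^{\langle 2\rangle}\in A\otimes_B A$ lies in (the image of) $B\otimes_B A$, and the inverse of $F$ is the map $$F^{-1}(a)=(F|_B)^{-1}\big(a_{(0)}F(a_{(1)}^{\langle 1\rangle})\big)\,a_{(1)}^{\langle 2\rangle},$$ i.e. $F^{-1}=m\circ((F|_B)^{-1}\otimes\mathrm{id})\circ(m\otimes\mathrm{id})\circ(\mathrm{id}\otimes F\otimes_B\mathrm{id})\circ(\mathrm{id}\otimes\tau)\circ\delta^A$, and it belongs to $\mathrm{Aut}_H(A)$. Moreover $\mathrm{Aut}_{ver}(A)$ is a subgroup of $\mathrm{Aut}_H(A)$.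
   Context: All algebras are unital and associative over $\mathbb{C}$; Sweedler notation with implicit summation is used. $H$ is a Hopf algebra with coproduct $\Delta(h)=h_{(1)}\otimes h_{(2)}$, counit $\epsilon$, antipode $S$. $A$ is a right $H$-comodule algebra with coaction $\delta^A(a)=a_{(0)}\otimes a_{(1)}$ (an algebra map), and $B=A^{coH}=\{b\in A:\delta^A(b)=b\otimes 1_H\}$. The extension $B\subseteq A$ is $H$-Hopf–Galois if the canonical map $\chi:A\otimes_B A\to A\otimes H$, $a'\otimes_B a\mapsto a'a_{(0)}\otimes a_{(1)}$, is bijective; the translation map is $\tau:H\to A\otimes_B A$, $\tau(h)=\chi^{-1}(1_A\otimes h)=:h^{\langle 1\rangle}\otimes_B h^{\langle 2\rangle}$. $m$ denotes multiplication of $A$. $\mathrm{Aut}_H(A)$ is the set of unital algebra maps $F:A\to A$ that are right $H$-comodule maps ($\delta^A\circ F=(F\otimes\mathrm{id})\circ\delta^A$) and whose restriction $F|_B$ is an algebra automorphism of $B$. $\mathrm{Aut}_{ver}(A)=\{F\in\mathrm{Aut}_H(A): F|_B=\mathrm{id}_B\}$. *)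

(* Defs.v *)
(* Tensors are represented by finite sums of pure tensors (seq of pairs),
   with equality in a tensor product defined by its universal property:
   two representatives are equal iff every (balanced) bilinear map into
   every k-vector space takes the same value on them. *)
From HB Require Import structures.
From mathcomp Require Import all_boot all_order all_algebra.
From mathcomp Require Import reals complex.
Set Implicit Arguments. Unset Strict Implicit. Unset Printing Implicit Defensive.
Import Order.TTheory GRing.Theory Num.Theory.
Local Open Scope ring_scope.

Section Tensors.
Variable k : fieldType.

Definition bilin (U V W : lmodType k) (f : U -> V -> W) : Prop :=
  (forall (a : k) u u' v, f (a *: u + u') v = a *: f u v + f u' v) /\
  (forall (a : k) u v v', f u (a *: v + v') = a *: f u v + f u v').

Definition trilin (U V X W : lmodType k) (f : U -> V -> X -> W) : Prop :=
  (forall (a : k) u u' v x, f (a *: u + u') v x = a *: f u v x + f u' v x) /\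
  (forall (a : k) u v v' x, f u (a *: v + v') x = a *: f u v x + f u v' x) /\
  (forall (a : k) u v x x', f u v (a *: x + x') = a *: f u v x + f u v x').

Definition teq (U V : lmodType k) (s t : seq (U * V)) : Prop :=
  forall (W : lmodType k) (f : U -> V -> W), bilin f ->
    \sum_(p <- s) f p.1 p.2 = \sum_(p <- t) f p.1 p.2.

Definition teq3 (U V X : lmodType k) (s t : seq (U * V * X)) : Prop :=
  forall (W : lmodType k) (f : U -> V -> X -> W), trilin f ->
    \sum_(p <- s) f p.1.1 p.1.2 p.2 = \sum_(p <- t) f p.1.1 p.1.2 p.2.

(* For an algebra A, a subset P of A (playing the role of the subalgebra B)
   and a k-vector space M with a right "P-action" act, equality in
   M (x)_B A: equality under all B-balanced k-bilinear maps. *)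
Definition teqM (A : algType k) (P : A -> Prop) (M : lmodType k)
    (act : M -> A -> M) (s t : seq (M * A)) : Prop :=
  forall (W : lmodType k) (f : M -> A -> W), bilin f ->
    (forall m a b, P b -> f (act m b) a = f m (b * a)) ->
    \sum_(p <- s) f p.1 p.2 = \sum_(p <- t) f p.1 p.2.

Definition teqB (A : algType k) (P : A -> Prop) (s t : seq (A * A)) : Prop :=
  @teqM A P A (fun x b => x * b) s t.

(* A (x)_B A where the right B-action on the first factor is twisted by F,
   x . b := x * F b ; this is the target of  F (x)_B id. *)
Definition teqBtw (A : algType k) (P : A -> Prop) (F : A -> A)
    (s t : seq (A * A)) : Prop :=
  @teqM A P A (fun x b => x * F b) s t.

Definition rmod_axioms (A : algType k) (P : A -> Prop) (M : lmodType k)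
    (act : M -> A -> M) : Prop :=
  [/\ forall m b b', P b -> P b' -> act m (b * b') = act (act m b) b',
      forall m, act m 1 = m,
      forall (a : k) m m' b, P b -> act (a *: m + m') b = a *: act m b + act m' b
    & forall (a : k) m b b', P b -> P b' ->
        act m (a *: b + b') = a *: act m b + act m b'].

Definition rmod_hom (A : algType k) (P : A -> Prop) (M N : lmodType k)
    (actM : M -> A -> M) (actN : N -> A -> N) (f : M -> N) : Prop :=
  (forall (a : k) m m', f (a *: m + m') = a *: f m + f m') /\
  (forall m b, P b -> f (actM m b) = actN (f m) b).

(* A is faithfully flat as a left B-module: a sequence M' -> M -> M'' of
   right B-modules is exact iff M' (x)_B A -> M (x)_B A -> M'' (x)_B A is. *)
Definition faithfully_flat (A : algType k) (P : A -> Prop) : Prop :=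
  forall (M1 M2 M3 : lmodType k) (act1 : M1 -> A -> M1) (act2 : M2 -> A -> M2)
    (act3 : M3 -> A -> M3) (f : M1 -> M2) (g : M2 -> M3),
    rmod_axioms P act1 -> rmod_axioms P act2 -> rmod_axioms P act3 ->
    rmod_hom P act1 act2 f -> rmod_hom P act2 act3 g ->
    ((forall m, g m = 0 <-> exists m', f m' = m) <->
     (forall s : seq (M2 * A),
        @teqM A P M3 act3 [seq (g p.1, p.2) | p <- s] [::] <->
        exists s' : seq (M1 * A),
          @teqM A P M2 act2 [seq (f p.1, p.2) | p <- s'] s)).

(* Hopf algebra structure (Delta, eps, S) on H, Sweedler-style:
   Delta h is a representative of Delta(h) = h_(1) (x) h_(2). *)
Definition is_hopf (H : algType k) (Delta : H -> seq (H * H)) (eps : H -> k)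
    (S : H -> H) : Prop :=
  [/\
      forall (a : k) x y, teq (Delta (a *: x + y))
                             ([seq (a *: p.1, p.2) | p <- Delta x] ++ Delta y),
      forall h, teq3 [seq (q.1, q.2, p.2) | p <- Delta h, q <- Delta p.1]
                     [seq (p.1, q.1, q.2) | p <- Delta h, q <- Delta p.2],
      (forall h, \sum_(p <- Delta h) eps p.1 *: p.2 = h /\
                 \sum_(p <- Delta h) eps p.2 *: p.1 = h) /\
      ((forall x y, teq (Delta (x * y))
                       [seq (p.1 * q.1, p.2 * q.2) | p <- Delta x, q <- Delta y])
        /\ teq (Delta 1) [:: (1, 1)]),
      [/\ forall (a : k) x y, eps (a *: x + y) = a * eps x + eps y,
          forall x y, eps (x * y) = eps x * eps y & eps 1 = 1]
    &
      (forall (a : k) x y, S (a *: x + y) = a *: S x + S y) /\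
      (forall h, \sum_(p <- Delta h) S p.1 * p.2 = eps h *: 1 /\
                 \sum_(p <- Delta h) p.1 * S p.2 = eps h *: 1) ].

Definition is_comod_alg (H A : algType k) (Delta : H -> seq (H * H))
    (eps : H -> k) (delta : A -> seq (A * H)) : Prop :=
  [/\ forall (a : k) x y, teq (delta (a *: x + y))
                             ([seq (a *: p.1, p.2) | p <- delta x] ++ delta y),
      forall x, teq3 [seq (q.1, q.2, p.2) | p <- delta x, q <- delta p.1]
                     [seq (p.1, q.1, q.2) | p <- delta x, q <- Delta p.2],
      forall x, \sum_(p <- delta x) eps p.2 *: p.1 = x,
      forall x y, teq (delta (x * y))
                      [seq (p.1 * q.1, p.2 * q.2) | p <- delta x, q <- delta y]
    & teq (delta 1) [:: (1, 1)] ].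

Definition coinv (H A : algType k) (delta : A -> seq (A * H)) (b : A) : Prop :=
  teq (delta b) [:: (b, 1)].

Definition chi (H A : algType k) (delta : A -> seq (A * H)) (s : seq (A * A))
  : seq (A * H) := [seq (p.1 * q.1, q.2) | p <- s, q <- delta p.2].

Definition hopf_galois (H A : algType k) (delta : A -> seq (A * H)) : Prop :=
  let P := coinv delta in
  [/\ forall s t, teqB P s t -> teq (chi delta s) (chi delta t),
      forall s t, teq (chi delta s) (chi delta t) -> teqB P s t
    & forall u : seq (A * H), exists s, teq (chi delta s) u].

(* tau is (a choice of representatives of) the translation map *)
Definition translation_map (H A : algType k) (delta : A -> seq (A * H))
    (tau : H -> seq (A * A)) : Prop :=
  forall h, teq (chi delta (tau h)) [:: (1, h)].

Definition AutH (H A : algType k) (delta : A -> seq (A * H)) (F : A -> A)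
  : Prop :=
  let P := coinv delta in
  [/\ forall (a : k) x y, F (a *: x + y) = a *: F x + F y,
      forall x y, F (x * y) = F x * F y,
      F 1 = 1,
      forall x, teq (delta (F x)) [seq (F p.1, p.2) | p <- delta x]
    & [/\ forall b, P b -> P (F b),
          forall b b', P b -> P b' -> F b = F b' -> b = b'
        & forall b, P b -> exists b', P b' /\ F b' = b] ].

Definition Autver (H A : algType k) (delta : A -> seq (A * H)) (F : A -> A)
  : Prop := AutH delta F /\ forall b, coinv delta b -> F b = b.

Definition Xelt (H A : algType k) (delta : A -> seq (A * H))
    (tau : H -> seq (A * A)) (F : A -> A) (a : A) : seq (A * A) :=
  [seq (p.1 * F q.1, q.2) | p <- delta a, q <- tau p.2].

End Tensors.

(* Main.v *)
Require Import Defs.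
From HB Require Import structures.
From mathcomp Require Import all_boot all_order all_algebra.
From mathcomp Require Import reals complex.
From Stdlib Require Import ClassicalEpsilon.
Set Implicit Arguments. Unset Strict Implicit. Unset Printing Implicit Defensive.
Import Order.TTheory GRing.Theory Num.Theory.
Local Open Scope ring_scope.

Section Gen.
Variable k : fieldType.

Definition lin (U V : lmodType k) (phi : U -> V) :=
  forall (a : k) x y, phi (a *: x + y) = a *: phi x + phi y.

Section LinL.
Variables (U V : lmodType k) (phi : U -> V) (hphi : lin phi).
Lemma lin0 : phi 0 = 0.
Proof.
have := hphi 1 0 0; rewrite !scale1r addr0 => h.
by apply: (@addrI _ (phi 0)); rewrite addr0 -h.
Qed.
Lemma linD x y : phi (x + y) = phi x + phi y.
Proof. by have := hphi 1 x y; rewrite !scale1r. Qed.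
Lemma linZ a x : phi (a *: x) = a *: phi x.
Proof. by have := hphi a x 0; rewrite !addr0 lin0 addr0. Qed.
Lemma linB x y : phi (x - y) = phi x - phi y.
Proof. by have := hphi (-1) y x; rewrite !scaleN1r addrC [_ + phi x]addrC. Qed.
Lemma lin_sum (I : Type) (r : seq I) (F : I -> U) :
  phi (\sum_(i <- r) F i) = \sum_(i <- r) phi (F i).
Proof.
elim: r => [|i r IH]; first by rewrite !big_nil lin0.
by rewrite !big_cons linD IH.
Qed.
End LinL.

Lemma lin_comp (U V X : lmodType k) (phi : U -> V) (psi : V -> X) :
  lin phi -> lin psi -> lin (fun x => psi (phi x)).
Proof. by move=> h1 h2 a x y; rewrite h1 h2. Qed.

Lemma bl_lin (U V W : lmodType k) (f : U -> V -> W) : bilin f -> forall v, lin (f^~ v).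
Proof. by move=> [h1 h2] v a x y; rewrite h1. Qed.
Lemma br_lin (U V W : lmodType k) (f : U -> V -> W) : bilin f -> forall u, lin (f u).
Proof. by move=> [h1 h2] u a x y; rewrite h2. Qed.

Lemma bilin_l (X U V W : lmodType k) (phi : X -> U) (f : U -> V -> W) :
  lin phi -> bilin f -> bilin (fun x v => f (phi x) v).
Proof. by move=> hp [h1 h2]; split=> a u u' v /=; rewrite ?hp ?h1 ?h2. Qed.
Lemma bilin_r (X U V W : lmodType k) (phi : X -> V) (f : U -> V -> W) :
  lin phi -> bilin f -> bilin (fun u x => f u (phi x)).
Proof. by move=> hp [h1 h2]; split=> a u u' v /=; rewrite ?hp ?h1 ?h2. Qed.
Lemma bilin_swap (U V W : lmodType k) (f : U -> V -> W) :
  bilin f -> bilin (fun v u => f u v).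
Proof. by move=> [h1 h2]; split=> a u u' v /=; rewrite ?h1 ?h2. Qed.

Lemma lin_mull (A : algType k) (c : A) : lin (fun x : A => c * x).
Proof. by move=> a x y; rewrite mulrDr -scalerCA -scalerAl. Qed.
Lemma lin_mulr (A : algType k) (c : A) : lin (fun x : A => x * c).
Proof. by move=> a x y; rewrite mulrDl -scalerAl. Qed.

Section Main.
Variables (H A : algType k) (Delta : H -> seq (H * H)) (eps : H -> k)
  (delta : A -> seq (A * H)) (tau : H -> seq (A * A)).
Hypothesis hcom : is_comod_alg Delta eps delta.
Hypothesis hgal : hopf_galois delta.
Hypothesis hcen : forall b x, coinv delta b -> b * x = x * b.
Hypothesis htr : translation_map delta tau.
Hypothesis hff : faithfully_flat (coinv delta).
Hypothesis heps : forall (a : k) x y, eps (a *: x + y) = a * eps x + eps y.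
Local Notation P := (coinv delta).

Lemma dlin a x y : teq (delta (a *: x + y))
                             ([seq (a *: p.1, p.2) | p <- delta x] ++ delta y).
Proof. by case: hcom. Qed.
Lemma dcounit x : \sum_(p <- delta x) eps p.2 *: p.1 = x.
Proof. by case: hcom. Qed.
Lemma dmul x y : teq (delta (x * y))
                      [seq (p.1 * q.1, p.2 * q.2) | p <- delta x, q <- delta y].
Proof. by case: hcom. Qed.
Lemma d1 : teq (delta 1) [:: (1, 1)].
Proof. by case: hcom. Qed.
Lemma galinj s t : teq (chi delta s) (chi delta t) -> teqB P s t.
Proof. move: hgal; rewrite /hopf_galois; cbv zeta => -[_ h2 _]; exact: h2. Qed.

Lemma sum_chi (W : lmodType k) (f : A -> H -> W) s :
  \sum_(p <- chi delta s) f p.1 p.2 =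
  \sum_(p <- s) \sum_(q <- delta p.2) f (p.1 * q.1) q.2.
Proof. by rewrite /chi big_allpairs_dep. Qed.

Lemma tr_sum (W : lmodType k) (f : A -> H -> W) : bilin f -> forall h,
  \sum_(q <- tau h) \sum_(r <- delta q.2) f (q.1 * r.1) r.2 = f 1 h.
Proof. by move=> hf h; have := htr h hf; rewrite sum_chi big_seq1. Qed.

Lemma I1 y : teqB P [seq (p.1 * q.1, q.2) | p <- delta y, q <- tau p.2] [:: (1, y)].
Proof.
apply: galinj => W f hf.
rewrite !sum_chi big_allpairs_dep big_seq1 /=.
apply: eq_bigr => p _.
move: (tr_sum (bilin_l (lin_mull p.1) hf) p.2) => /= E.
rewrite mulr1 in E; rewrite mul1r -E.
by apply: eq_bigr => q _; apply: eq_bigr => r _; rewrite mulrA.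
Qed.


Lemma I2 a h h' :
  teqB P (tau (a *: h + h')) ([seq (a *: q.1, q.2) | q <- tau h] ++ tau h').
Proof.
apply: galinj => W f hf.
rewrite !sum_chi big_cat big_map /= !(tr_sum hf) (proj2 hf).
congr (_ + _).
rewrite -(tr_sum hf) scaler_sumr; apply: eq_bigr => q _.
rewrite scaler_sumr; apply: eq_bigr => r _.
by rewrite -scalerAl (linZ (bl_lin hf _)).
Qed.

Lemma tsumL (W : lmodType k) (g : A -> A -> W) : bilin g ->
  (forall m a b, P b -> g (m * b) a = g m (b * a)) -> forall a h h',
  \sum_(q <- tau (a *: h + h')) g q.1 q.2 =
  a *: \sum_(q <- tau h) g q.1 q.2 + \sum_(q <- tau h') g q.1 q.2.
Proof.
move=> hg hb a h h'.
rewrite (I2 a h h' hg hb) big_cat big_map scaler_sumr /=.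
by congr (_ + _); apply: eq_bigr => q _; exact: (linZ (bl_lin hg _)).
Qed.

Lemma P1 : P 1.
Proof. exact: d1. Qed.

Lemma PM b b' : P b -> P b' -> P (b * b').
Proof.
move=> hb hb' W f hf.
rewrite (dmul b b' hf) big_allpairs_dep big_seq1 /=.
transitivity (\sum_(p <- delta b) f (p.1 * b') p.2).
  apply: eq_bigr => p _.
  move: (hb' _ _ (bilin_r (lin_mull p.2) (bilin_l (lin_mull p.1) hf))) => /=.
  by rewrite big_seq1 /= mulr1.
move: (hb _ _ (bilin_l (lin_mulr b') hf)) => /=.
by rewrite big_seq1 /=.
Qed.

Lemma PL a b b' : P b -> P b' -> P (a *: b + b').
Proof.
move=> hb hb' W f hf.
rewrite (dlin a b b' hf) big_cat big_map /= big_seq1 /=.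
transitivity (a *: \sum_(p <- delta b) f p.1 p.2 + \sum_(p <- delta b') f p.1 p.2).
  congr (_ + _); rewrite scaler_sumr; apply: eq_bigr => p _.
  exact: (linZ (bl_lin hf _)).
rewrite (hb _ _ hf) (hb' _ _ hf) !big_seq1 /=.
by rewrite (proj1 hf).
Qed.

Lemma swap_bal (W : lmodType k) (f : A -> A -> W) :
  (forall m a b, P b -> f (m * b) a = f m (b * a)) ->
  forall m a b, P b -> f a (m * b) = f (b * a) m.
Proof.
move=> hb m a b Pb.
by rewrite (hcen a Pb) (hb _ _ _ Pb) (hcen m Pb).
Qed.

Section FSec.
Variable F : A -> A.
Hypotheses (Flin : lin F) (Fmul : forall x y, F (x * y) = F x * F y)
  (F1 : F 1 = 1)
  (Fc : forall x, teq (delta (F x)) [seq (F p.1, p.2) | p <- delta x])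
  (FB : forall b, P b -> P (F b)).

Lemma I3 x y :
  teqB P [:: (x, y)] [seq (x * p.1 * F q.1, F q.2) | p <- delta y, q <- tau p.2].
Proof.
apply: galinj => W f hf.
rewrite !sum_chi big_seq1 big_allpairs_dep /=.
apply: eq_bigr => p _.
symmetry.
transitivity (\sum_(q <- tau p.2) \sum_(r <- delta q.2)
                 f (x * p.1 * F (q.1 * r.1)) r.2).
  apply: eq_bigr => q _.
  move: (Fc q.2 (bilin_l (lin_mull (x * p.1 * F q.1)) hf)) => /= ->.
  rewrite big_map /=; apply: eq_bigr => r _.
  by rewrite Fmul !mulrA.
move: (tr_sum (bilin_l (lin_comp Flin (lin_mull (x * p.1))) hf) p.2) => /= ->.
by rewrite F1 mulr1.
Qed.


Section InjS.
Variables (W : lmodType k) (f : A -> A -> W) (hf : bilin f)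
  (hb1 : forall m a b, P b -> f (m * b) a = f m (F b * a)).

Definition gc (c : A) := fun u v => f v (c * F u).
Lemma gc_bil c : bilin (gc c).
Proof. exact: (bilin_swap (bilin_r (lin_comp Flin (lin_mull c)) hf)). Qed.
Lemma gc_bal c m a b : P b -> gc c (m * b) a = gc c m (b * a).
Proof.
move=> Pb.
by rewrite /gc Fmul (hcen a Pb) (hb1 _ _ Pb) (hcen _ (FB Pb)) mulrA.
Qed.

Definition Phi x u h := \sum_(q <- tau h) gc (x * u) q.1 q.2.
Lemma Phi_bil x : bilin (Phi x).
Proof.
split.
- move=> a u u' h; rewrite /Phi scaler_sumr -big_split; apply: eq_bigr => q _ /=.
  exact: (lin_comp (lin_comp (lin_mull x) (lin_mulr (F q.1))) (br_lin hf q.2)) a u u'.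
- move=> a u h h'; rewrite /Phi.
  exact: (tsumL (gc_bil _) (@gc_bal (x * u)) a h h').
Qed.

Definition ft z x := \sum_(p <- delta z) Phi x p.1 p.2.
Lemma ft_bil : bilin ft.
Proof.
split.
- move=> a z z' x.
  rewrite /ft (dlin a z z' (Phi_bil x)) big_cat big_map scaler_sumr /=.
  by congr (_ + _); apply: eq_bigr => p _; exact: (linZ (bl_lin (Phi_bil x) _)).
- move=> a z x x'.
  rewrite /ft scaler_sumr -big_split; apply: eq_bigr => p _ /=.
  rewrite /Phi scaler_sumr -big_split; apply: eq_bigr => q _ /=.
  rewrite /gc.
  exact: (lin_comp (lin_comp (lin_mulr p.1) (lin_mulr (F q.1))) (br_lin hf q.2)) a x x'.
Qed.

Lemma ft_bal m a b : P b -> ft (m * b) a = ft m (b * a).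
Proof.
move=> Pb.
rewrite /ft (dmul m b (Phi_bil a)) big_allpairs_dep /=.
apply: eq_bigr => p _.
move: (Pb _ _ (bilin_r (lin_mull p.2) (bilin_l (lin_mull p.1) (Phi_bil a)))) => /= ->.
rewrite big_seq1 /= mulr1.
rewrite /Phi /gc; apply: eq_bigr => q _.
by rewrite -(hcen p.1 Pb) mulrA (hcen a Pb).
Qed.

Lemma ftF y x : ft (F y) x = f y x.
Proof.
rewrite /ft.
move: (Fc y (Phi_bil x)) => /= ->.
rewrite big_map /=.
transitivity (\sum_(t <- [seq (p.1 * q.1, q.2) | p <- delta y, q <- tau p.2])
                 gc x t.1 t.2).
  rewrite big_allpairs_dep; apply: eq_bigr => p _; rewrite /Phi /gc.
  by apply: eq_bigr => q _ /=; rewrite Fmul mulrA.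
by rewrite (I1 y (gc_bil x) (@gc_bal x)) big_seq1 /gc /= F1 mulr1.
Qed.
End InjS.

Hypotheses (FinjB : forall b b', P b -> P b' -> F b = F b' -> b = b')
  (FsurjB : forall b, P b -> exists b', P b' /\ F b' = b).

Definition G c := epsilon (inhabits (0 : A)) (fun b => P b /\ F b = c).
Lemma GP c : P c -> P (G c) /\ F (G c) = c.
Proof. by move=> Pc; exact: (epsilon_spec _ _ (FsurjB Pc)). Qed.
Lemma GF b : P b -> G (F b) = b.
Proof. by move=> Pb; have [h1 h2] := GP (FB Pb); exact: FinjB. Qed.

Lemma Inj s : teqB P [seq (F p.1, p.2) | p <- s] [::] ->
  teqM P (fun m c => m * G c) s [::].
Proof.
move=> h W f hf hbal.
have hb1 : forall m a b, P b -> f (m * b) a = f m (F b * a).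
  by move=> m a b Pb; rewrite -{1}(GF Pb); exact: hbal (FB Pb).
transitivity (\sum_(p <- [seq (F p.1, p.2) | p <- s]) ft f p.1 p.2).
  by rewrite big_map; apply: eq_bigr => p _ /=; rewrite (ftF hf hb1).
by rewrite (h _ _ (ft_bil hf hb1) (ft_bal hf hb1)) !big_nil.
Qed.

Lemma Surj s : exists s', teqB P [seq (F p.1, p.2) | p <- s'] s.
Proof.
elim: s => [|[y x] s [s' IH]]; first by exists [::].
exists ([seq (q.2, x * p.1 * F q.1) | p <- delta y, q <- tau p.2] ++ s').
move=> W f hf hbal.
rewrite map_cat big_cat big_cons (IH _ _ hf hbal) /=.
congr (_ + _).
rewrite big_map big_allpairs_dep /=.
move: (I3 x y (bilin_swap hf) (swap_bal hbal)) => /=.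
by rewrite big_seq1 big_allpairs_dep /= => ->.
Qed.


Lemma GM b b' : P b -> P b' -> G (b * b') = G b * G b'.
Proof.
move=> Pb Pb'; have [g1 g2] := GP (PM Pb Pb').
have [h1 h2] := GP Pb; have [h1' h2'] := GP Pb'.
apply: FinjB => //; first exact: PM.
by rewrite g2 Fmul h2 h2'.
Qed.
Lemma G1 : G 1 = 1.
Proof. by rewrite -{1}F1 GF //; exact: P1. Qed.
Lemma GL a b b' : P b -> P b' -> G (a *: b + b') = a *: G b + G b'.
Proof.
move=> Pb Pb'; have [g1 g2] := GP (PL a Pb Pb').
have [h1 h2] := GP Pb; have [h1' h2'] := GP Pb'.
apply: FinjB => //; first exact: PL.
by rewrite g2 Flin h2 h2'.
Qed.

Lemma rstd : rmod_axioms P (fun (x : A) (b : A) => x * b).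
Proof.
split.
- by move=> m b b' _ _; rewrite mulrA.
- by move=> m; rewrite mulr1.
- by move=> a m m' b _; exact: (lin_mulr b).
- by move=> a m b b' _ _; exact: (lin_mull m).
Qed.

Lemma ract1 : rmod_axioms P (fun (x : A) (c : A) => x * G c).
Proof.
split.
- by move=> m b b' Pb Pb'; rewrite GM // mulrA.
- by move=> m; rewrite G1 mulr1.
- by move=> a m m' b _; exact: (lin_mulr (G b)).
- by move=> a m b b' Pb Pb'; rewrite GL //; exact: (lin_mull m).
Qed.

Lemma homF : rmod_hom P (fun (x : A) (c : A) => x * G c) (fun (x : A) (b : A) => x * b) F.
Proof.
split; first exact: Flin.
by move=> m b Pb; rewrite Fmul (GP Pb).2.
Qed.

Lemma hom0 (act act' : A -> A -> A) : (forall b, P b -> act' 0 b = 0) ->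
  rmod_hom P act act' (fun _ => 0).
Proof.
move=> h; split; first by move=> *; rewrite scaler0 addr0.
by move=> m b Pb; rewrite h.
Qed.

Lemma Finj : injective F.
Proof.
have h0 : rmod_hom P (fun (x : A) (b : A) => x * b) (fun (x : A) (c : A) => x * G c)
           (fun _ => 0).
  by apply: hom0 => b _; rewrite mul0r.
have [_ hRL] := hff rstd ract1 rstd h0 homF.
have hL : forall m, F m = 0 <-> exists m', (fun _ : A => (0 : A)) m' = m.
  apply: hRL => s; split.
  - move=> h; exists [::] => W f hf hb.
    by rewrite (Inj h hf hb).
  - move=> [s' h] W f hf hb.
    have hb' : forall m a c, P c -> f (F (m * G c)) a = f (F m) (c * a).
      by move=> m a c Pc; rewrite Fmul (GP Pc).2 hb.
    move: (h _ _ (bilin_l Flin hf) hb') => /=.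
    rewrite !big_map big_nil big1 => [<-|p _ /=]; last first.
      by rewrite (lin0 Flin) (lin0 (bl_lin hf _)).
    by [].
move=> x y Fxy.
have hxy : F (x - y) = 0 by rewrite (linB Flin) Fxy subrr.
have [m' /= E] := (hL (x - y)).1 hxy.
by apply/eqP; rewrite -subr_eq0 -E eqxx.
Qed.

Lemma Fsurj a : exists x, F x = a.
Proof.
have h0 : rmod_hom P (fun (x : A) (b : A) => x * b) (fun (x : A) (b : A) => x * b)
           (fun _ => 0).
  by apply: hom0 => b _; rewrite mul0r.
have [_ hRL] := hff ract1 rstd rstd homF h0.
have hL : forall m, (fun _ : A => (0 : A)) m = 0 <-> exists m', F m' = m.
  apply: hRL => s; split.
  - by move=> _; exact: Surj.
  - move=> _ W f hf hb; rewrite big_map big_nil big1 // => p _ /=.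
    exact: (lin0 (bl_lin hf _)).
exact: ((hL a).1 erefl).
Qed.

Lemma XF c : teqBtw P F (Xelt delta tau F (F c)) [:: (F 1, c)].
Proof.
move=> W f hf hbt.
pose Psi u h := \sum_(q <- tau h) f (u * F q.1) q.2.
have gbil : forall u, bilin (fun u' v => f (u * F u') v).
  by move=> u; exact: (bilin_l (lin_comp Flin (lin_mull u)) hf).
have gbal : forall u m a b, P b -> f (u * F (m * b)) a = f (u * F m) (b * a).
  by move=> u m a b Pb; rewrite Fmul mulrA hbt.
have Psibil : bilin Psi.
  split.
  - move=> a u u' h; rewrite /Psi scaler_sumr -big_split; apply: eq_bigr => q _ /=.
    exact: (lin_comp (lin_mulr (F q.1)) (bl_lin hf q.2)) a u u'.
  - by move=> a u h h'; exact: (tsumL (gbil u) (gbal u)).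
rewrite /Xelt big_allpairs_dep /=.
transitivity (\sum_(p <- delta (F c)) Psi p.1 p.2); first by [].
rewrite (Fc c Psibil) big_map /=.
transitivity (\sum_(t <- [seq (p.1 * q.1, q.2) | p <- delta c, q <- tau p.2])
                f (F t.1) t.2).
  rewrite big_allpairs_dep; apply: eq_bigr => p _; rewrite /Psi.
  by apply: eq_bigr => q _ /=; rewrite Fmul.
have hb2 : forall m a b, P b -> f (F (m * b)) a = f (F m) (b * a).
  by move=> m a b Pb; rewrite Fmul hbt.
by rewrite (I1 c (bilin_l Flin hf) hb2) !big_seq1.
Qed.

End FSec.

Lemma tau_counit h : \sum_(q <- tau h) q.1 * q.2 = eps h *: 1.
Proof.
have fb : bilin (fun (u : A) (x : H) => eps x *: u).
  split.
  - by move=> a u u' v; rewrite scalerDr !scalerA mulrC.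
  - by move=> a u v v'; rewrite heps scalerDl scalerA.
move: (tr_sum fb h) => /= <-.
apply: eq_bigr => q _.
rewrite -{1}(dcounit q.2) mulr_sumr.
by apply: eq_bigr => r _; rewrite -scalerCA -scalerAl.
Qed.


Lemma inv_part F : AutH delta F ->
  (forall a, exists s : seq (A * A),
     (forall p, p \in s -> coinv delta p.1) /\
     teqBtw (coinv delta) F (Xelt delta tau F a) [seq (F p.1, p.2) | p <- s]) /\
  (exists Finv : A -> A,
     [/\ AutH delta Finv,
         forall a, Finv (F a) = a,
         forall a, F (Finv a) = a
       & forall a (s : seq (A * A)),
           (forall p, p \in s -> coinv delta p.1) ->
           teqBtw (coinv delta) F (Xelt delta tau F a)
                  [seq (F p.1, p.2) | p <- s] ->
           Finv a = \sum_(p <- s) p.1 * p.2]).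
Proof.
move=> [Flin Fmul F1 Fc [FB FinjB FsurjB]].
pose Finv a := epsilon (inhabits (0 : A)) (fun x => F x = a).
have FFinv : forall a, F (Finv a) = a.
  by move=> a; exact: (epsilon_spec _ _ (Fsurj Flin Fmul F1 Fc FB FinjB FsurjB a)).
have Fi := Finj Flin Fmul F1 Fc FB FinjB FsurjB.
have FinvF : forall x, Finv (F x) = x by move=> x; apply: Fi; rewrite FFinv.
have Finvlin : lin Finv.
  by move=> a x y; apply: Fi; rewrite FFinv Flin !FFinv.
have Finvmul : forall x y, Finv (x * y) = Finv x * Finv y.
  by move=> x y; apply: Fi; rewrite FFinv Fmul !FFinv.
split.
  move=> a; exists [:: (1, Finv a)]; split.
    by move=> p; rewrite inE => /eqP -> /=; exact: P1.
  rewrite -{1}(FFinv a).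
  exact: XF.
exists Finv; split => //.
- split => //.
  + by apply: Fi; rewrite FFinv F1.
  + move=> x W f hf.
    move: (Fc (Finv x) _ _ (bilin_l Finvlin hf)) => /=.
    rewrite FFinv !big_map /= => E.
    rewrite E; apply: eq_bigr => p _.
    by rewrite FinvF.
  + split.
    * by move=> b Pb; have [b' [Pb' <-]] := FsurjB _ Pb; rewrite FinvF.
    * by move=> b b' _ _ E; rewrite -(FFinv b) -(FFinv b') E.
    * by move=> b Pb; exists (F b); split; [exact: FB | exact: FinvF].
- move=> a s _ hs.
  have mulbil : bilin (fun x y : A => x * y).
    by split; [move=> c u u' v; exact: (lin_mulr v) | move=> c u v v'; exact: (lin_mull u)].
  have hbal : forall m y b, coinv delta b ->
      (fun x y => Finv x * y) (m * F b) y = (fun x y => Finv x * y) m (b * y).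
    by move=> m y b Pb /=; rewrite Finvmul FinvF mulrA.
  move: (hs _ _ (bilin_l Finvlin mulbil) hbal).
  rewrite /Xelt big_allpairs_dep big_map /= => E.
  transitivity (\sum_(p <- s) Finv (F p.1) * p.2); last first.
    by apply: eq_bigr => p _; rewrite FinvF.
  rewrite -E.
  transitivity (\sum_(p <- delta a) Finv p.1 * (\sum_(q <- tau p.2) q.1 * q.2)).
    rewrite -{1}(dcounit a) (lin_sum Finvlin); apply: eq_bigr => p _.
    by rewrite (linZ Finvlin) tau_counit -scalerCA mulr1.
  apply: eq_bigr => p _; rewrite mulr_sumr; apply: eq_bigr => q _.
  by rewrite Finvmul FinvF mulrA.
Qed.

End Main.

Section AutLem.
Variables (H A : algType k) (delta : A -> seq (A * H)).

Lemma AutH_id : AutH delta id.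
Proof.
split => //.
- by move=> x W f hf; rewrite big_map.
- by split => // b Pb; exists b.
Qed.

Lemma AutH_comp F G : AutH delta F -> AutH delta G -> AutH delta (G \o F).
Proof.
move=> [Fl Fm F1 Fc [FB Fi Fs]] [Gl Gm G1 Gc [GB Gi Gs]]; split.
- by move=> a x y /=; rewrite Fl Gl.
- by move=> x y /=; rewrite Fm Gm.
- by rewrite /= F1 G1.
- move=> x W f hf /=.
  rewrite (Gc (F x) _ f hf) !big_map.
  by move: (Fc x _ _ (bilin_l Gl hf)); rewrite big_map /= => ->.
- split.
  + by move=> b Pb /=; exact: (GB _ (FB _ Pb)).
  + move=> b b' Pb Pb' /= E; apply: Fi => //; apply: Gi => //; exact: FB.
  + move=> b Pb; have [b1 [Pb1 <-]] := Gs b Pb; have [b2 [Pb2 <-]] := Fs b1 Pb1.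
    by exists b2.
Qed.
End AutLem.
End Gen.

Unset Implicit Arguments.
Theorem proposition2p6 (R : realType) (H A : algType R[i])
    (Delta : H -> seq (H * H)) (eps : H -> R[i]) (S : H -> H)
    (delta : A -> seq (A * H)) (tau : H -> seq (A * A)) :
  is_hopf Delta eps S ->
  is_comod_alg Delta eps delta ->
  hopf_galois delta ->
  faithfully_flat (coinv delta) ->
  (forall b x, coinv delta b -> b * x = x * b) ->
  translation_map delta tau ->
  [/\ (* Aut_H(A) is a group for F.G := G o F, with unit id *)
      AutH delta id,
      forall F G, AutH delta F -> AutH delta G -> AutH delta (G \o F),
      (* inverses, with the explicit formula *)
      forall F, AutH delta F ->
        (forall a, exists s : seq (A * A),
           (forall p, p \in s -> coinv delta p.1) /\
           teqBtw (coinv delta) F (Xelt delta tau F a)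
                  [seq (F p.1, p.2) | p <- s]) /\
        (exists Finv : A -> A,
           [/\ AutH delta Finv,
               forall a, Finv (F a) = a,
               forall a, F (Finv a) = a
             & forall a (s : seq (A * A)),
                 (forall p, p \in s -> coinv delta p.1) ->
                 teqBtw (coinv delta) F (Xelt delta tau F a)
                        [seq (F p.1, p.2) | p <- s] ->
                 Finv a = \sum_(p <- s) p.1 * p.2]),
      (* Aut_ver(A) is a subgroup *)
      Autver delta id /\
        (forall F G, Autver delta F -> Autver delta G -> Autver delta (G \o F))
    & forall F G, Autver delta F -> AutH delta G ->
        (forall a, G (F a) = a) -> (forall a, F (G a) = a) -> Autver delta G].
Proof.
move=> hH hC hG hF hcen htr.
have heps : forall (a : R[i]) x y, eps (a *: x + y) = a * eps x + eps y.
  by case: hH => _ _ _ [h _ _] _.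
split.
- exact: AutH_id.
- exact: AutH_comp.
- by move=> F hAF; exact: (inv_part hC hG hcen htr hF heps hAF).
- split; first by split; [exact: AutH_id | done].
  move=> F G [hAF fF] [hAG fG]; split; first exact: AutH_comp.
  by move=> b Pb /=; rewrite fF // fG.
- move=> F G [hAF fF] hAG GF FG; split => // b Pb.
  have [_ _ _ _ [GB _ _]] := hAG.
  by rewrite -{1}(fF _ (GB _ Pb)) FG.
Qed.
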